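(* Let $E$ be an equation in the unknowns $x_1,\dots,x_n$. (1) $\mathcal S_E=0$ if and only if $E$ is trivial. (2) If $\mathcal S_E\ne0$ and $\mathcal S_E(\beta)=0$ for some $\beta\in\mathbb N_0^n$, then $(\beta)_i=0$ for at least two indices $i$.
   Context: An equation is a pair $E=(u,v)$ of words over $\{x_1,\dots,x_n\}$, trivial if $u=v$. For $E=(x_{i_1}\cdots x_{i_r},\,x_{j_1}\cdots x_{j_s})$ define $S_{E,x_j}=\sum_{a:\,i_a=j}\prod_{t=1}^{a-1}X_{i_t}-\sum_{a:\,j_a=j}\prod_{t=1}^{a-1}X_{j_t}\in\mathbb Z[X_1,\dots,X_n]$ (empty product $=1$), $\mathcal S_E=(S_{E,x_1},\dots,S_{E,x_n})$. For $\beta\in\mathbb N_0^n$ and a polynomial $p$, $p(\beta)\in\mathbb Z[x]$ is the image under $X_i\mapsto x^{(\beta)_i}$, and $\mathcal S_E(\beta)=(S_{E,x_1}(\beta),\dots,S_{E,x_n}(\beta))$. *)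

(* Defs.v *)
From HB Require Import structures.
From mathcomp Require Import all_boot all_order all_algebra.
Set Implicit Arguments. Unset Strict Implicit. Unset Printing Implicit Defensive.
Import Order.TTheory GRing.Theory Num.Theory.
Local Open Scope ring_scope.

(* Unknowns x_1..x_n are represented by 'I_n; a word is a seq 'I_n;
   an equation is a pair of words. *)
Definition word (n : nat) := seq 'I_n.
Definition equation (n : nat) := (word n * word n)%type.
Definition trivial_eq n (E : equation n) : bool := E.1 == E.2.

Definition monomial (n : nat) := {ffun 'I_n -> nat}.

(* A polynomial of Z[X_1..X_n] given as a formal integer combination of
   monomials (list of (coefficient, monomial) terms). *)
Definition mpoly (n : nat) := seq (int * monomial n).

Definition mcoef n (p : mpoly n) (m : monomial n) : int :=
  \sum_(t <- p | t.2 == m) t.1.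

Definition mpoly_zero n (p : mpoly n) : Prop := forall m, mcoef p m = 0.

(* Image under X_i |-> x^(beta i), in Z[x]. *)
Definition mpoly_eval n (p : mpoly n) (beta : 'I_n -> nat) : {poly int} :=
  \sum_(t <- p) t.1 *: 'X^(\sum_(i < n) t.2 i * beta i)%N.

Definition word_monomial n (w : word n) : monomial n :=
  [ffun i => count_mem i w].

(* Terms sum_{a : w_a = j} prod_{t<a} X_{w_t} (0-indexed positions a). *)
Definition side_terms n (w : word n) (j : 'I_n) : mpoly n :=
  [seq (1%:Z, word_monomial (take a w)) | a <- iota 0 (size w) & nth j w a == j].

Definition S_E n (E : equation n) (j : 'I_n) : mpoly n :=
  side_terms E.1 j ++ [seq (- t.1, t.2) | t <- side_terms E.2 j].

Definition SE_zero n (E : equation n) : Prop := forall j, mpoly_zero (S_E E j).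

Definition SE_eval_zero n (E : equation n) (beta : 'I_n -> nat) : Prop :=
  forall j, mpoly_eval (S_E E j) beta = 0.

(* Main.v *)
Require Import Defs.
From HB Require Import structures.
From mathcomp Require Import all_boot all_order all_algebra.
From mathcomp Require Import zify.

Section Helpers.
Import Order.TTheory GRing.Theory Num.Theory.
Local Open Scope ring_scope.
Variable n : nat.
Variable beta : 'I_n -> nat.

Definition mdeg (m : monomial n) : nat := (\sum_(i < n) m i * beta i)%N.
Definition wdeg (w : word n) : nat := sumn (map beta w).

Lemma mdeg_word w : mdeg (word_monomial w) = wdeg w.
Proof.
rewrite /mdeg /wdeg; elim: w => [|x w IH] /=.
  by apply: big1 => i _; rewrite ffunE.
rewrite -IH.
under eq_bigr => i _ do rewrite !ffunE /= mulnDl.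
rewrite big_split /= (bigD1 x) //= eqxx mul1n big1 ?addn0; last first.
  by move=> i; rewrite eq_sym => /negbTE ->.
by congr (_ + _)%N; apply: eq_bigr => i _; rewrite ffunE.
Qed.

Fixpoint cntR (d : nat) (w : word n) (j : 'I_n) (D : nat) : nat :=
  if w is x :: w' then (((x == j) && (d == D)) + cntR (d + beta x) w' j D)%N else 0%N.

Lemma cntR_iota d w j D :
  count (fun a => (nth j w a == j) && (d + wdeg (take a w) == D)%N) (iota 0 (size w))
  = cntR d w j D.
Proof.
elim: w d => [|x w IH] d //=.
rewrite /= addn0 -(IH (d + beta x)%N).
have -> : iota 1 (size w) = map (addn 1) (iota 0 (size w)) := iotaDl 1 0 _.
rewrite count_map; congr (_ + _)%N; apply: eq_count => a /=.
by rewrite add0n /wdeg /= addnA.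
Qed.

Lemma cntR_cat d p w j D :
  cntR d (p ++ w) j D = (cntR d p j D + cntR (d + wdeg p) w j D)%N.
Proof.
elim: p d => [|x p IH] d /=; first by rewrite addn0.
by rewrite IH addnA /wdeg /= addnA.
Qed.

Lemma cntR_gt d w j D : (D < d)%N -> cntR d w j D = 0%N.
Proof.
elim: w d => [|x w IH] d //= H.
rewrite IH; last by lia.
have -> : (d == D) = false by apply/eqP; lia.
by rewrite andbF.
Qed.

Lemma sum_one (T : Type) (s : seq T) (P : pred T) :
  \sum_(a <- s | P a) (1 : int) = (count P s)%:Z.
Proof.
elim: s => [|x s IH]; first by rewrite big_nil.
rewrite big_cons /= IH; case: (P x) => //=.
Qed.
Lemma dummy_unused : True. exact I.
Qed.

Lemma side_sum w j D :
  \sum_(t <- side_terms w j | mdeg t.2 == D) t.1 = (cntR 0 w j D)%:Z.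
Proof.
rewrite /side_terms big_map big_filter_cond sum_one -cntR_iota.
by congr Posz; apply: eq_count => a /=; rewrite mdeg_word add0n.
Qed.

Lemma sum_SE (E : equation n) j D :
  \sum_(t <- S_E E j | mdeg t.2 == D) t.1 =
  (cntR 0 E.1 j D)%:Z - (cntR 0 E.2 j D)%:Z.
Proof.
by rewrite /S_E big_cat side_sum big_map /= sumrN side_sum.
Qed.

Lemma count_split (T : Type) (a b : pred T) s :
  (count (fun t => a t && b t) s + count (fun t => a t && ~~ b t) s)%N = count a s.
Proof.
elim: s => [|x s IH] //=; rewrite -IH; case: (a x); case: (b x) => /=; lia.
Qed.

Lemma mzero_sum (p : mpoly n) (P : pred (monomial n)) :
  mpoly_zero p -> \sum_(t <- p | P t.2) t.1 = 0.
Proof.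
move=> Z.
move: {2}(count (fun t => P t.2) p) (leqnn (count (fun t => P t.2) p)) => k.
elim: k P => [|k IH] P Hk.
  rewrite big_hasC //; apply/negP => /hasP [t tp Pt].
  have : (0 < count (fun t => P t.2) p)%N by rewrite -has_count; apply/hasP; exists t.
  by move: Hk; lia.
case: (boolP (has (fun t => P t.2) p)); last first.
  by move=> H; rewrite big_hasC.
move=> /hasP [t0 t0p Pt0].
rewrite (bigID (fun t => t.2 == t0.2)) /=.
have -> : \sum_(i <- p | P i.2 && (i.2 == t0.2)) i.1 = mcoef p t0.2.
  rewrite /mcoef; apply: eq_bigl => t.
  by case: eqP => [->|]; rewrite ?Pt0 ?andbF.
rewrite Z add0r.
have := IH (fun m => P m && (m != t0.2)).
rewrite /=; apply.
have := count_split _ (fun t : (int * monomial n)%type => P t.2) (fun t => t.2 == t0.2) p.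
have : (0 < count (fun t : (int * monomial n)%type => P t.2 && (t.2 == t0.2)) p)%N.
  by rewrite -has_count; apply/hasP; exists t0; rewrite ?Pt0 ?eqxx.
move=> /= H1 H2; move: Hk; lia.
Qed.

Lemma coef_eval (p : mpoly n) D :
  (mpoly_eval p beta)`_D = \sum_(t <- p | mdeg t.2 == D) t.1.
Proof.
rewrite /mpoly_eval coef_sum [RHS]big_mkcond /=.
apply: eq_bigr => t _.
rewrite coefZ coefXn /mdeg eq_sym.
by case: (_ == _); rewrite ?mulr1 ?mulr0.
Qed.

Lemma prefix_split (u v : word n) : u != v -> exists p,
  (exists a b u' v', a != b /\ u = p ++ a :: u' /\ v = p ++ b :: v') \/
  (exists a u', u = p ++ a :: u' /\ v = p) \/
  (exists b v', u = p /\ v = p ++ b :: v').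
Proof.
elim: u v => [|a u IH] [|b v] //= H.
- by exists [::]; right; right; exists b, v.
- by exists [::]; right; left; exists a, u.
- case: (eqVneq a b) => [Eab|Nab]; last first.
    by exists [::]; left; exists a, b, u, v.
  subst b; have /IH [p Hp] : u != v by apply: contra H => /eqP ->.
  exists (a :: p).
  case: Hp => [[a' [b' [u' [v' [? [-> ->]]]]]]|[[a' [u' [-> ->]]]|[b' [v' [-> ->]]]]].
  + by left; exists a', b', u', v'.
  + by right; left; exists a', u'.
  + by right; right; exists b', v'.
Qed.

Lemma key (u v : word n) : u != v ->
  (forall i1 i2, beta i1 = 0%N -> beta i2 = 0%N -> i1 = i2) ->
  exists j D, cntR 0 u j D != cntR 0 v j D.
Proof.
move=> /prefix_split [p Hp] Z1.
case: Hp => [[a [b [u' [v' [Nab [-> ->]]]]]]|[[a [u' [-> ->]]]|[b [v' [-> ->]]]]].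
- have Nba : b != a by rewrite eq_sym.
  have G : forall x w j, beta x != 0%N -> cntR (wdeg p + beta x) w j (wdeg p) = 0%N.
    by move=> x w j Bx; apply: cntR_gt; move: Bx; rewrite -lt0n; lia.
  case: (eqVneq (beta a) 0%N) => [Ba|Ba].
    have Bb : beta b != 0%N.
      by apply/eqP => Bb; move: Nab; rewrite (Z1 _ _ Ba Bb) eqxx.
    exists a, (wdeg p); rewrite !cntR_cat eqn_add2l /= !add0n !eqxx (negbTE Nba) (G b) //=.
  case: (eqVneq (beta b) 0%N) => [Bb0|Bb0].
    exists b, (wdeg p); rewrite !cntR_cat eqn_add2l /= !add0n !eqxx (negbTE Nab) (G a) //=.
  exists a, (wdeg p); rewrite !cntR_cat eqn_add2l /= !add0n !eqxx (negbTE Nba) (G a) // (G b) //.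
- exists a, (wdeg p); rewrite !cntR_cat add0n /= eqxx /=.
  rewrite eqxx; lia.
- exists b, (wdeg p); rewrite !cntR_cat add0n /= eqxx /=.
  rewrite eqxx; lia.
Qed.

End Helpers.

Lemma triv_zero n (E : equation n) : trivial_eq E -> SE_zero E.
Proof.
move/eqP => Et j m.
rewrite /mcoef /S_E Et big_cat; move: (side_terms E.2 j) => L.
by rewrite big_map /= GRing.sumrN GRing.subrr.
Qed.

Theorem lemma3p1 (n : nat) (E : equation n) :
  (SE_zero E <-> trivial_eq E) /\
  (forall beta : 'I_n -> nat,
      ~ SE_zero E -> SE_eval_zero E beta ->
      exists i1 i2 : 'I_n, i1 <> i2 /\ beta i1 = 0%N /\ beta i2 = 0%N).
Proof.
split; [split|].
- move=> Z; apply: contraT => NT.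
  have [j [D H]] := @key _ (fun _ => 1%N) _ _ NT (fun i1 i2 (h : 1%N = 0%N) => ltac:(discriminate h)).
  have := @mzero_sum _ _ (fun m => @mdeg _ (fun _ => 1%N) m == D) (Z j).
  rewrite sum_SE => /eqP; rewrite GRing.subr_eq0 => /eqP [] /eqP.
  by rewrite (negbTE H).
- exact: triv_zero.
- move=> b NZ EV.
  case: (boolP [exists i1, exists i2, (i1 != i2) && (b i1 == 0%N) && (b i2 == 0%N)]).
    move=> /existsP [i1 /existsP [i2 /andP [/andP [/eqP N /eqP B1] /eqP B2]]].
    by exists i1, i2.
  move=> /negP NE.
  have NT : ~~ trivial_eq E by apply/negP => /triv_zero.
  have Z1 : forall i1 i2, b i1 = 0%N -> b i2 = 0%N -> i1 = i2.
    move=> i1 i2 B1 B2; case: (eqVneq i1 i2) => // N; exfalso; apply: NE.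
    by apply/existsP; exists i1; apply/existsP; exists i2; rewrite N B1 B2.
  have [j [D H]] := @key _ _ _ _ NT Z1.
  have := congr1 (fun q : {poly int} => (q`_D)%R) (EV j).
  rewrite /= coef0 coef_eval sum_SE => /eqP; rewrite GRing.subr_eq0 => /eqP [] /eqP.
  by rewrite (negbTE H).
Qed.
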